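(* Let $m,n\in\mathbb N$ with $m\ge n\ge 1$, and let $\beta>1$ be the real zero of $x^3-mx^2-mx-n$ that exceeds $1$. Then $\mathrm{Fin}(-\beta)$ is a ring if and only if $n=m$. (Equivalently, $\mathrm{Fin}(-\beta)=\mathbb Z[\beta]$ if and only if $n=m$.)
   Context: Fix a real number $\beta>1$ and set $\ell=\frac{-\beta}{\beta+1}$. Define $T_{-\beta}:[\ell,\ell+1)\to[\ell,\ell+1)$ by $T_{-\beta}(x)=-\beta x-\lfloor -\beta x-\ell\rfloor$. For $x\in[\ell,\ell+1)$, the $(-\beta)$-expansion of $x$ is $d_{-\beta}(x)=x_1x_2\cdots$ with $x_i=\lfloor -\beta\, T_{-\beta}^{i-1}(x)-\ell\rfloor\in\{0,\dots,\lfloor\beta\rfloor\}$. For arbitrary $x\in\mathbb R$, let $k\ge0$ be minimal with $x/(-\beta)^k\in(\ell,\ell+1)$ and let $d_{-\beta}(x/(-\beta)^k)=x_1x_2\cdots$. The $(-\beta)$-expansion of $x$ is $x_1\cdots x_k\bullet x_{k+1}x_{k+2}\cdots$ if $k\ge1$, and $0\bullet x_1x_2\cdots$ if $k=0$. It represents $x=\sum_i x_i'(-\beta)^i$ in the usual positional way. $\mathbb Z_{-\beta}$ is the set of reals whose $(-\beta)$-expansion has only zeros after $\bullet$. $\mathrm{Fin}(-\beta)=\bigcup_{i\ge0}(-\beta)^{-i}\mathbb Z_{-\beta}$ is the set of reals whose $(-\beta)$-expansion has only finitely many nonzero digits. The question is whether this set is closed under addition, negation and multiplication, i.e. whether it is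 a subring of $\mathbb R$. *)

(* Defs.v *)
From Stdlib Require Import Reals Lra Lia ZArith.
Open Scope R_scope.

(* floor function: Int_part r = up r - 1 is the floor of r *)
Definition floorR (r : R) : Z := Int_part r.

Definition nb_ell (beta : R) : R := - beta / (beta + 1).

Definition nb_T (beta x : R) : R :=
  - beta * x - IZR (floorR (- beta * x - nb_ell beta)).

(* digit x_{i+1} of d_{-beta}(x) (0-indexed):
   x_{i+1} = floor(-beta * T^i(x) - ell) *)
Definition nb_digit (beta x : R) (i : nat) : Z :=
  floorR (- beta * Nat.iter i (nb_T beta) x - nb_ell beta).

Definition nb_in_interval (beta y : R) : Prop :=
  nb_ell beta < y < nb_ell beta + 1.

Definition in_Fin (beta x : R) : Prop :=
  exists k : nat,
    nb_in_interval beta (x / (- beta) ^ k) /\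
    (forall j : nat, (j < k)%nat -> ~ nb_in_interval beta (x / (- beta) ^ j)) /\
    exists N : nat, forall i : nat, (N <= i)%nat ->
      nb_digit beta (x / (- beta) ^ k) i = 0%Z.

Definition Fin_is_ring (beta : R) : Prop :=
  (forall x y, in_Fin beta x -> in_Fin beta y -> in_Fin beta (x + y)) /\
  (forall x, in_Fin beta x -> in_Fin beta (- x)) /\
  (forall x y, in_Fin beta x -> in_Fin beta y -> in_Fin beta (x * y)).

(* Main.v *)
Require Import Defs.
From Stdlib Require Import Reals Lra Lia ZArith Classical.
Open Scope R_scope.


Definition Hn (x y : Z) : Z := Z.max (Z.abs x) (Z.max (Z.abs y) (Z.abs (y - x))).
Definition phase (x y : Z) : Z :=
  let h := Hn x y in
  if Z.eqb y h then (if Z.eqb (y - x) h then 0 else if Z.eqb x h then 2 else 1)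
  else if Z.eqb x h then (if Z.eqb (y - x) (- h) then 4 else 3)
  else if Z.eqb (y - x) (- h) then (if Z.eqb y (- h) then 6 else 5)
  else if Z.eqb y (- h) then (if Z.eqb x (- h) then 8 else 7)
  else if Z.eqb x (- h) then (if Z.eqb (y - x) h then 10 else 9)
  else 11.
Definition mu (x y : Z) : Z := 12 * Hn x y + 11 - phase x y.

Lemma bnd1 (a b X Y h : R) : 0 <= a <= 1 -> 0 <= b <= 1 ->
  -h <= X <= h -> -h <= Y <= h -> -h <= Y - X <= h -> a*Y - b*X <= h.
Proof.
  intros Ha Hb HX HY HXY.
  destruct (Rle_lt_dec 0 X); destruct (Rle_lt_dec 0 Y).
  - assert (0 <= (1-a)*Y) by (apply Rmult_le_pos; lra).
    assert (0 <= b*X) by (apply Rmult_le_pos; lra). lra.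
  - assert (0 <= a*(-Y)) by (apply Rmult_le_pos; lra).
    assert (0 <= b*X) by (apply Rmult_le_pos; lra). lra.
  - assert (0 <= (1-a)*Y) by (apply Rmult_le_pos; lra).
    assert (0 <= (1-b)*(-X)) by (apply Rmult_le_pos; lra). lra.
  - assert (0 <= a*(-Y)) by (apply Rmult_le_pos; lra).
    assert (0 <= (1-b)*(-X)) by (apply Rmult_le_pos; lra). lra.
Qed.

Lemma bnd2 (a b X Y h : R) : 0 <= a -> 0 <= b -> a + b <= 1 ->
  -h <= X <= h -> -h <= Y <= h -> a*X + b*Y <= h.
Proof.
  intros Ha Hb Hab HX HY.
  assert (0 <= a*(h - X)) by (apply Rmult_le_pos; lra).
  assert (0 <= b*(h - Y)) by (apply Rmult_le_pos; lra).
  assert (0 <= (1 - a - b)*h) by (apply Rmult_le_pos; lra). lra.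
Qed.

Lemma phase_range x y : (0 <= phase x y <= 11)%Z.
Proof. unfold phase; repeat match goal with |- context [Z.eqb ?a ?b] => destruct (Z.eqb a b) end; lia. Qed.

Definition imp (A B : Prop) := A -> B.

Lemma comb (x y z h : Z) :
  h = Hn x y ->
  (- h <= x <= h)%Z -> (- h <= y <= h)%Z -> (- h <= y - x <= h)%Z -> (1 <= h)%Z ->
  (z <= h)%Z -> (- h <= z)%Z -> (z - y <= h)%Z -> (- h <= z - y)%Z ->
  (x = h -> y = h -> (z < h)%Z) ->
  (x = (- h)%Z -> y = (- h)%Z -> (- h < z)%Z) ->
  (x = (- h)%Z -> (y <= 0)%Z -> (z - y + x <= 0)%Z) ->
  (x = (- h)%Z -> y = 0%Z -> (z - y + x <= -1)%Z) ->
  ((y = x + h)%Z -> (x <= -1)%Z -> (z - y + x <= -1 /\ x - h < z - y + x)%Z) ->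
  (x = h -> (0 <= y)%Z -> (z - y + x <= h)%Z) ->
  (x = (- h)%Z -> (y <= 0)%Z -> (- h <= z - y + x)%Z) ->
  (mu y z < mu x y)%Z.
Proof.
  intros Eh0 Hx Hy Hxy Hh1 Iz1 Iz2 Iz3 Iz4 I2 I3 I4a I4b I5 I6 I7.
  change (imp (x = h) (imp (y = h) (z < h)%Z)) in I2.
  change (imp (x = (- h)%Z) (imp (y = (- h)%Z) (- h < z)%Z)) in I3.
  change (imp (x = (- h)%Z) (imp (y <= 0)%Z (z - y + x <= 0)%Z)) in I4a.
  change (imp (x = (- h)%Z) (imp (y = 0)%Z (z - y + x <= -1)%Z)) in I4b.
  change (imp (y = x + h)%Z (imp (x <= -1)%Z (z - y + x <= -1 /\ x - h < z - y + x)%Z)) in I5.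
  change (imp (x = h) (imp (0 <= y)%Z (z - y + x <= h)%Z)) in I6.
  change (imp (x = (- h)%Z) (imp (y <= 0)%Z (- h <= z - y + x)%Z)) in I7.
  unfold mu. rewrite <- Eh0.
  assert (HH : (Hn y z <= h)%Z) by (unfold Hn; lia).
  pose proof (phase_range x y). pose proof (phase_range y z).
  destruct (Z.eq_dec (Hn y z) h) as [Eh|Eh]; [|lia].
  rewrite Eh.
  enough (phase x y < phase y z)%Z by lia.
  assert (Hb : x = h \/ x = (-h)%Z \/ y = h \/ y = (-h)%Z \/ (y - x = h)%Z \/ (y - x = -h)%Z)
    by (rewrite Eh0; unfold Hn; lia).
  assert (Hb' : y = h \/ y = (-h)%Z \/ z = h \/ z = (-h)%Z \/ (z - y = h)%Z \/ (z - y = -h)%Z)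
    by (rewrite <- Eh; unfold Hn; lia).
  unfold phase. rewrite Eh, <- Eh0. clear Eh HH Eh0.
  repeat match goal with |- context [Z.eqb ?a ?b] => destruct (Z.eqb_spec a b) end;
  repeat match goal with H : imp ?A ?B |- _ => first [specialize (H ltac:(lia)) | clear H] end;
  repeat match goal with H : _ /\ _ |- _ => destruct H end;
  lia.
Qed.

Lemma key (r0 r1 g : R) (x y z : Z) :
  0 < r0 -> r0 < r1 -> r1 < 1 -> r1 - r0 < 1 - g -> r0 < g -> 1/2 < g -> g < 1 ->
  0 <= IZR z - r1 * IZR y + r0 * IZR x + g ->
  IZR z - r1 * IZR y + r0 * IZR x + g < 1 ->
  (x <> 0 \/ y <> 0)%Z -> (mu y z < mu x y)%Z.
Proof.
  intros H0 H1 H2 H3 H4 H5 H6 C1 C2 Hnz.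
  set (h := Hn x y).
  assert (Hx : (- h <= x <= h)%Z) by (unfold h, Hn; lia).
  assert (Hy : (- h <= y <= h)%Z) by (unfold h, Hn; lia).
  assert (Hxy : (- h <= y - x <= h)%Z) by (unfold h, Hn; lia).
  assert (Hh1 : (1 <= h)%Z) by (unfold h, Hn; lia).
  pose proof (IZR_le _ _ (proj1 Hx)) as X1. pose proof (IZR_le _ _ (proj2 Hx)) as X2.
  pose proof (IZR_le _ _ (proj1 Hy)) as Y1. pose proof (IZR_le _ _ (proj2 Hy)) as Y2.
  pose proof (IZR_le _ _ (proj1 Hxy)) as XY1. pose proof (IZR_le _ _ (proj2 Hxy)) as XY2.
  pose proof (IZR_le _ _ Hh1) as Hh1R.
  rewrite opp_IZR in X1, Y1, XY1. rewrite minus_IZR in XY1, XY2.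
  set (X := IZR x) in *. set (Y := IZR y) in *. set (Z0 := IZR z) in *. set (hR := IZR h) in *.
  assert (B1 : r1 * Y - r0 * X <= hR) by (apply bnd1; lra).
  assert (B1' : r1 * (-Y) - r0 * (-X) <= hR) by (apply bnd1; lra).
  assert (B2 : r0 * X + (1 - r1) * Y <= hR) by (apply bnd2; lra).
  assert (B2' : r0 * (-X) + (1 - r1) * (-Y) <= hR) by (apply bnd2; lra).
  assert (Iz1 : (z <= h)%Z).
  { cut (z < h + 1)%Z; [lia|]. apply lt_IZR. rewrite plus_IZR. fold Z0 hR. lra. }
  assert (Iz2 : (- h <= z)%Z).
  { cut (- h - 1 < z)%Z; [lia|]. apply lt_IZR. rewrite minus_IZR, opp_IZR. fold Z0 hR. lra. }
  assert (Iz3 : (z - y <= h)%Z).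
  { cut (z - y < h + 1)%Z; [lia|]. apply lt_IZR. rewrite plus_IZR, minus_IZR. fold Z0 hR Y. lra. }
  assert (Iz4 : (- h <= z - y)%Z).
  { cut (- h - 1 < z - y)%Z; [lia|]. apply lt_IZR. rewrite !minus_IZR, opp_IZR. fold Z0 hR Y. lra. }
  assert (I2 : x = h -> y = h -> (z < h)%Z).
  { intros Ex Ey. apply lt_IZR. fold Z0 hR.
    assert (EX : X = hR) by (subst X; rewrite Ex; reflexivity).
    assert (EY : Y = hR) by (subst Y; rewrite Ey; reflexivity).
    assert (0 <= (1 - r1 + r0) * (hR - 1)) by (apply Rmult_le_pos; lra).
    rewrite EX, EY in C2. lra. }
  assert (I3 : x = (- h)%Z -> y = (- h)%Z -> (- h < z)%Z).
  { intros Ex Ey. apply lt_IZR. rewrite opp_IZR. fold Z0 hR.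
    assert (EX : X = - hR) by (subst X; rewrite Ex, opp_IZR; reflexivity).
    assert (EY : Y = - hR) by (subst Y; rewrite Ey, opp_IZR; reflexivity).
    assert (0 <= (1 - r1 + r0) * (hR - 1)) by (apply Rmult_le_pos; lra).
    rewrite EX, EY in C1. lra. }
  assert (I4a : x = (- h)%Z -> (y <= 0)%Z -> (z - y + x <= 0)%Z).
  { intros Ex Ey. cut (z - y + x < 0 + 1)%Z; [lia|]. apply lt_IZR.
    rewrite !plus_IZR, minus_IZR. fold Z0 Y X.
    assert (X = - hR) by (subst X; rewrite Ex, opp_IZR; reflexivity).
    apply IZR_le in Ey. fold Y in Ey. nra. }
  assert (I4b : x = (- h)%Z -> y = 0%Z -> (z - y + x <= -1)%Z).
  { intros Ex Ey. cut (z - y + x < 0)%Z; [lia|]. apply lt_IZR.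
    rewrite plus_IZR, minus_IZR. fold Z0 Y X.
    assert (X = - hR) by (subst X; rewrite Ex, opp_IZR; reflexivity).
    assert (Y = 0) by (subst Y; rewrite Ey; reflexivity).
    simpl. nra. }
  assert (I5 : (y = x + h)%Z -> (x <= -1)%Z -> (z - y + x <= -1 /\ x - h < z - y + x)%Z).
  { intros Ey Ex. apply IZR_le in Ex.
    assert (Y = X + hR) by (subst Y X hR; rewrite Ey, plus_IZR; reflexivity).
    fold X in Ex. split.
    - cut (z - y + x < 0)%Z; [lia|]. apply lt_IZR.
      rewrite plus_IZR, minus_IZR. fold Z0 Y X. simpl. nra.
    - apply lt_IZR. rewrite plus_IZR, !minus_IZR. fold Z0 Y X hR. nra. }
  assert (I6 : x = h -> (0 <= y)%Z -> (z - y + x <= h)%Z).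
  { intros Ex Ey. cut (z - y + x < h + 1)%Z; [lia|]. apply lt_IZR.
    rewrite !plus_IZR, minus_IZR. fold Z0 Y X hR.
    assert (EX : X = hR) by (subst X; rewrite Ex; reflexivity).
    apply IZR_le in Ey. fold Y in Ey.
    assert (0 <= (1 - r1) * Y) by (apply Rmult_le_pos; lra).
    assert (0 <= r0 * hR) by (apply Rmult_le_pos; lra).
    rewrite EX in C2. lra. }
  assert (I7 : x = (- h)%Z -> (y <= 0)%Z -> (- h <= z - y + x)%Z).
  { intros Ex Ey. cut (- h - 1 < z - y + x)%Z; [lia|]. apply lt_IZR.
    rewrite plus_IZR, !minus_IZR, opp_IZR. fold Z0 Y X hR.
    assert (EX : X = - hR) by (subst X; rewrite Ex, opp_IZR; reflexivity).
    apply IZR_le in Ey. fold Y in Ey.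
    assert (0 <= (1 - r1) * (-Y)) by (apply Rmult_le_pos; lra).
    assert (0 <= r0 * hR) by (apply Rmult_le_pos; lra).
    rewrite EX in C1. lra. }
  clearbody X Y Z0 hR.
  apply (comb x y z h); auto.
Qed.


Definition good (M N : Z) (b : R) : Prop :=
  (1 <= N)%Z /\ (N <= M)%Z /\ 1 < b /\ b^3 = IZR M * b^2 + IZR M * b + IZR N.

Lemma floor_unique (r : R) (z : Z) : IZR z <= r < IZR z + 1 -> floorR r = z.
Proof.
  intros [H1 H2]. unfold floorR. destruct (base_Int_part r) as [A B].
  assert (IZR z < IZR (Int_part r) + 1) by lra.
  assert (IZR (Int_part r) < IZR z + 1) by lra.
  rewrite <- plus_IZR in *. apply lt_IZR in H. apply lt_IZR in H0. lia.
Qed.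

Lemma floor_spec (r : R) : IZR (floorR r) <= r < IZR (floorR r) + 1.
Proof. unfold floorR. destruct (base_Int_part r). lra. Qed.

Lemma good_bounds M N b : good M N b -> IZR M < b < IZR M + 1 /\ 1 <= IZR N <= IZR M.
Proof.
  intros (H1 & H2 & H3 & H4). apply IZR_le in H1. apply IZR_le in H2.
  assert (IZR M < b).
  { destruct (Rlt_le_dec (IZR M) b) as [|Hc]; auto.
    assert (b^2 * (b - IZR M) <= 0).
    { assert (0 <= b^2) by nra. nra. }
    nra. }
  split; [split|lra]; auto.
  destruct (Rlt_le_dec b (IZR M + 1)) as [|Hc]; auto.
  assert (b^2 * (b - IZR M) >= b^2) by nra. nra.
Qed.

Lemma ell_facts b : 1 < b -> -1 < nb_ell b < 0 /\ nb_ell b + 1 = / (b+1) /\ nb_ell b = - b / (b+1).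
Proof.
  intros Hb. unfold nb_ell. split; [|split; [field; lra | reflexivity]].
  assert (E : - b / (b+1) = - 1 + / (b+1)) by (field; lra).
  assert (0 < / (b+1)) by (apply Rinv_0_lt_compat; lra).
  assert (/ (b+1) < 1). { rewrite <- Rinv_1. apply Rinv_lt_contravar; lra. }
  rewrite E. lra.
Qed.

Lemma T_range b x : nb_ell b <= nb_T b x < nb_ell b + 1.
Proof.
  unfold nb_T. pose proof (floor_spec (- b * x - nb_ell b)). lra.
Qed.

Lemma T_step b x d : IZR d <= - b * x - nb_ell b < IZR d + 1 -> nb_T b x = - b * x - IZR d.
Proof. intros H. unfold nb_T. rewrite (floor_unique _ d H). reflexivity. Qed.

Lemma T_zero b : 1 < b -> nb_T b 0 = 0.
Proof.
  intros Hb. destruct (ell_facts b Hb) as [[E1 E2] _].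
  rewrite (T_step b 0 0); [simpl; ring|]. simpl. lra.
Qed.

Lemma iter_zero b i : 1 < b -> Nat.iter i (nb_T b) 0 = 0.
Proof. intros Hb; induction i; simpl; [reflexivity|]. rewrite IHi. apply T_zero; auto. Qed.

Lemma digit_zero b x i : 1 < b -> Nat.iter i (nb_T b) x = 0 -> nb_digit b x i = 0%Z.
Proof.
  intros Hb H. unfold nb_digit. rewrite H. apply floor_unique.
  destruct (ell_facts b Hb) as [[E1 E2] _]. simpl. lra.
Qed.


Lemma pow1 (b : R) : (- b) ^ 1 = - b. Proof. ring. Qed.
Lemma pow2 (b : R) : (- b) ^ 2 = b * b. Proof. ring. Qed.


Lemma one_in_Fin M N b : good M N b -> (N < M)%Z -> in_Fin b 1.
Proof.
  intros HG HNM. destruct (good_bounds _ _ _ HG) as [[Hb1 Hb2] [Hn1 Hn2]].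
  destruct HG as (HN1 & HNM2 & Hb & Hc).
  assert (HM2 : 2 <= IZR M) by (apply IZR_le; lia).
  destruct (ell_facts b Hb) as [[E1 E2] [E3 E4]].
  set (v := / (b+1)) in *. assert (Hv : v * (b+1) = 1) by (unfold v; field; lra).
  assert (Hvp : 0 < v) by (unfold v; apply Rinv_0_lt_compat; lra).
  assert (Hy : 1 / (- b) ^ 1 = - / b) by (simpl; field; lra).
  set (u := / b) in *. assert (Hu : u * b = 1) by (unfold u; field; lra).
  assert (Hup : 0 < u) by (unfold u; apply Rinv_0_lt_compat; lra).
  assert (Hu2 : u < 1/2) by nra. assert (Hv2 : v < 1/3) by nra.
  exists 1%nat. split; [|split].
  - unfold nb_in_interval. rewrite Hy. lra.
  - intros j Hj. assert (j = 0%nat) by lia. subst j. unfold nb_in_interval. simpl.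
    intros [_ Hc']. rewrite Rdiv_1_r in Hc'. lra.
  - exists 1%nat. intros i Hi. rewrite Hy. apply digit_zero; auto.
    destruct i as [|i]; [lia|]. rewrite Nat.iter_succ_r.
    rewrite (T_step b (- u) 1).
    + replace (- b * - u - IZR 1) with 0 by (simpl; nra). apply iter_zero; auto.
    + simpl. nra.
Qed.

Lemma mone_not_in_Fin M N b : good M N b -> (N < M)%Z -> ~ in_Fin b (-1).
Proof.
  intros HG HNM. destruct (good_bounds _ _ _ HG) as [[Hb1 Hb2] [Hn1 Hn2]].
  destruct HG as (HN1 & HNM2 & Hb & Hc).
  assert (HMN : IZR N + 1 <= IZR M) by (rewrite <- plus_IZR; apply IZR_le; lia).
  destruct (ell_facts b Hb) as [[E1 E2] [E3 E4]].
  set (v := / (b+1)) in *. assert (Hv : v * (b+1) = 1) by (unfold v; field; lra).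
  assert (Hvp : 0 < v) by (unfold v; apply Rinv_0_lt_compat; lra).
  set (u := / b) in *. assert (Hu : u * b = 1) by (unfold u; field; lra).
  assert (Hup : 0 < u) by (unfold u; apply Rinv_0_lt_compat; lra).
  set (m := IZR M) in *. set (n := IZR N) in *.
  set (K := b^2 - m * b - m).
  assert (HK : K * b = n) by (unfold K; nra).
  assert (HKp : 0 < K) by nra.
  assert (Huv : v < u) by nra.
  assert (Hy : -1 / (- b) ^ 2 = - (u * u)) by (simpl; unfold u; field; lra).
  assert (Hint : nb_in_interval b (- (u*u))).
  { unfold nb_in_interval. split; [|nra].
    assert (u < 1) by nra. nra. }
  intros (k & Hk1 & Hk2 & Nn & HN).
  assert (k = 2%nat).
  { destruct (Nat.lt_total k 2) as [Hl|[Hl|Hl]]; auto.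
    - exfalso. unfold nb_in_interval in Hk1.
      destruct k as [|[|k]]; [| |lia]; simpl in Hk1.
      + rewrite Rdiv_1_r in Hk1. lra.
      + replace (-1 / (- b * 1)) with u in Hk1 by (unfold u; field; lra). lra.
    - exfalso. apply (Hk2 2%nat Hl). rewrite Hy. exact Hint. }
  subst k. rewrite Hy in HN.
  set (s3 := - b^2 + (m+1) * b - 1).
  assert (Lb : v <= b - m - K).
  { assert ((b - m - K) * b = K + m - n) by (unfold K; nra).
    assert ((K + m - n) * (b + 1) >= b) by nra.
    nra. }
  assert (Hs3 : forall i, Nat.iter (3 + i) (nb_T b) (- (u*u)) = s3).
  { induction i.
    - simpl.
      rewrite (T_step b (- (u*u)) 1); [|simpl; nra].
      replace (- b * - (u * u) - IZR 1) with (u - 1) by (simpl; nra).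
      rewrite (T_step b (u - 1) M); [|fold m; split; nra].
      fold m. replace (- b * (u - 1) - m) with (b - 1 - m) by nra.
      rewrite (T_step b (b - 1 - m) 1); [|simpl; unfold K in Lb; split; nra].
      unfold s3. simpl. ring.
    - replace (3 + S i)%nat with (S (3 + i)) by lia.
      rewrite Nat.iter_succ, IHi.
      rewrite (T_step b s3 (N+1)).
      + rewrite plus_IZR. fold n. unfold s3. simpl. simpl in Hc. nra.
      + rewrite plus_IZR. fold n. unfold s3. unfold K in Lb. simpl in Hc. split; nra. }
  specialize (HN (3 + Nn)%nat ltac:(lia)).
  unfold nb_digit in HN. rewrite Hs3 in HN.
  rewrite (floor_unique _ (N+1)) in HN; [lia|].
  rewrite plus_IZR. fold n. unfold s3. unfold K in Lb. simpl in Hc. split; nra.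
Qed.


Definition Zb (M N : Z) (b w : R) : Prop :=
  exists a c d : Z, w = IZR a + IZR c * b + IZR d * b^2.
Definition Sb (M N : Z) (b x : R) : Prop := exists k : nat, Zb M N b (x * b ^ k).


Lemma Zb_int M N b z : Zb M N b (IZR z).
Proof. exists z, 0%Z, 0%Z. simpl. ring. Qed.

Lemma Zb_add M N b x y : Zb M N b x -> Zb M N b y -> Zb M N b (x + y).
Proof.
  intros (a1 & c1 & d1 & ->) (a2 & c2 & d2 & ->).
  exists (a1 + a2)%Z, (c1 + c2)%Z, (d1 + d2)%Z. rewrite !plus_IZR. ring.
Qed.

Lemma Zb_opp M N b x : Zb M N b x -> Zb M N b (- x).
Proof.
  intros (a1 & c1 & d1 & ->).
  exists (- a1)%Z, (- c1)%Z, (- d1)%Z. rewrite !opp_IZR. ring.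
Qed.

Lemma Zb_mul M N b x y : b^3 = IZR M * b^2 + IZR M * b + IZR N ->
  Zb M N b x -> Zb M N b y -> Zb M N b (x * y).
Proof.
  intros Hc (a1 & c1 & d1 & ->) (a2 & c2 & d2 & ->).
  set (p := (c1 * d2 + d1 * c2)%Z). set (q := (d1 * d2)%Z).
  exists (a1 * a2 + q * M * N + p * N)%Z,
         (a1 * c2 + c1 * a2 + q * M * M + q * N + p * M)%Z,
         (a1 * d2 + c1 * c2 + d1 * a2 + q * M * M + q * M + p * M)%Z.
  apply Rminus_diag_uniq.
  transitivity ((IZR q * b + IZR p + IZR q * IZR M) * (b^3 - IZR M * b^2 - IZR M * b - IZR N)).
  - unfold p, q. repeat rewrite ?plus_IZR, ?mult_IZR. ring.
  - rewrite Hc. ring.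
Qed.

Lemma Zb_b M N b : Zb M N b b.
Proof. exists 0%Z, 1%Z, 0%Z. simpl. ring. Qed.

Lemma Zb_pow M N b k : b^3 = IZR M * b^2 + IZR M * b + IZR N -> Zb M N b (b ^ k).
Proof.
  intros Hc. induction k; simpl.
  - apply (Zb_int M N b 1).
  - apply Zb_mul; auto. apply Zb_b.
Qed.

Lemma Sb_of_Zb M N b x : Zb M N b x -> Sb M N b x.
Proof. intros H. exists 0%nat. simpl. rewrite Rmult_1_r. exact H. Qed.

Lemma Sb_shift M N b x k : b^3 = IZR M * b^2 + IZR M * b + IZR N ->
  Zb M N b (x * b ^ k) -> Zb M N b (x * b ^ (k + 1)).
Proof.
  intros Hc H. rewrite pow_add. replace (x * (b ^ k * b ^ 1)) with ((x * b^k) * b) by ring.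
  apply Zb_mul; auto. apply Zb_b.
Qed.

Lemma Sb_lift M N b x k j : b^3 = IZR M * b^2 + IZR M * b + IZR N ->
  Zb M N b (x * b ^ k) -> Zb M N b (x * b ^ (k + j)).
Proof.
  intros Hc H. rewrite pow_add. replace (x * (b ^ k * b ^ j)) with ((x * b^k) * b^j) by ring.
  apply Zb_mul; auto. apply Zb_pow; auto.
Qed.

Lemma Sb_add M N b x y : b^3 = IZR M * b^2 + IZR M * b + IZR N ->
  Sb M N b x -> Sb M N b y -> Sb M N b (x + y).
Proof.
  intros Hc [k1 H1] [k2 H2]. exists (k1 + k2)%nat.
  rewrite Rmult_plus_distr_r. apply Zb_add.
  - apply Sb_lift; auto.
  - rewrite Nat.add_comm. apply Sb_lift; auto.
Qed.

Lemma Sb_opp M N b x : Sb M N b x -> Sb M N b (- x).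
Proof.
  intros [k H]. exists k. replace (- x * b ^ k) with (- (x * b^k)) by ring.
  apply Zb_opp; auto.
Qed.

Lemma Sb_mul M N b x y : b^3 = IZR M * b^2 + IZR M * b + IZR N ->
  Sb M N b x -> Sb M N b y -> Sb M N b (x * y).
Proof.
  intros Hc [k1 H1] [k2 H2]. exists (k1 + k2)%nat.
  rewrite pow_add. replace (x * y * (b ^ k1 * b ^ k2)) with ((x * b^k1) * (y * b^k2)) by ring.
  apply Zb_mul; auto.
Qed.

Lemma Sb_div M N b x : 1 < b -> Sb M N b x -> Sb M N b (x / b).
Proof.
  intros Hb [k H]. exists (S k). simpl.
  replace (x / b * (b * b ^ k)) with (x * b ^ k) by (field; lra). exact H.
Qed.

Lemma Sb_int M N b z : Sb M N b (IZR z).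
Proof. apply Sb_of_Zb, Zb_int. Qed.

Lemma Sb_b M N b : Sb M N b b.
Proof. apply Sb_of_Zb, Zb_b. Qed.

Lemma Sb_pow M N b x k : b^3 = IZR M * b^2 + IZR M * b + IZR N ->
  Sb M N b x -> Sb M N b (x ^ k).
Proof.
  intros Hc Hx. induction k; simpl.
  - apply (Sb_int M N b 1).
  - apply Sb_mul; auto.
Qed.

Lemma iter_bound b y i : 1 < b -> nb_in_interval b y -> -1 <= Nat.iter i (nb_T b) y <= 1.
Proof.
  intros Hb Hy. destruct (ell_facts b Hb) as [[E1 E2] [E3 _]].
  assert (0 < / (b+1) < 1).
  { split; [apply Rinv_0_lt_compat; lra|]. rewrite <- Rinv_1. apply Rinv_lt_contravar; lra. }
  destruct i; simpl.
  - unfold nb_in_interval in Hy. lra.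
  - pose proof (T_range b (Nat.iter i (nb_T b) y)). lra.
Qed.

Lemma T_eq b x : nb_T b x = - b * x - IZR (floorR (- b * x - nb_ell b)).
Proof. reflexivity. Qed.

Lemma Fin_Sb M N b x : good M N b -> in_Fin b x -> Sb M N b x.
Proof.
  intros HG (k & Hk1 & _ & Nn & HN).
  destruct HG as (HN1 & HNM & Hb & Hc).
  set (y := x / (- b) ^ k) in *.
  set (t := Nat.iter Nn (nb_T b) y).
  assert (Ht : forall i, Nat.iter (Nn + i) (nb_T b) y = (- b) ^ i * t).
  { induction i.
    - rewrite Nat.add_0_r. simpl. rewrite Rmult_1_l. reflexivity.
    - replace (Nn + S i)%nat with (S (Nn + i)) by lia. rewrite Nat.iter_succ.
      rewrite T_eq. specialize (HN (Nn + i)%nat ltac:(lia)). unfold nb_digit in HN.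
      rewrite HN, IHi. simpl. ring. }
  assert (t0 : t = 0).
  { destruct (Req_dec t 0) as [|Hne]; auto. exfalso.
    assert (Hat : 0 < Rabs t) by (apply Rabs_pos_lt; auto).
    destruct (Pow_x_infinity (- b) ltac:(rewrite Rabs_left; lra) (2 / Rabs t)) as [i Hi].
    specialize (Hi i ltac:(lia)).
    pose proof (iter_bound b y (Nn + i) Hb Hk1) as Hbd. rewrite Ht in Hbd.
    assert (Rabs ((- b) ^ i * t) <= 1) by (apply Rabs_le; lra).
    rewrite Rabs_mult in H.
    assert (2 / Rabs t * Rabs t = 2) by (field; lra).
    nra. }
  assert (Hsy : forall dd j, (j + dd = Nn)%nat -> Sb M N b (Nat.iter j (nb_T b) y)).
  { induction dd; intros j Hj.
    - rewrite Nat.add_0_r in Hj. subst j. fold t. rewrite t0. apply (Sb_int M N b 0).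
    - specialize (IHdd (S j) ltac:(lia)). rewrite Nat.iter_succ, T_eq in IHdd.
      set (w := Nat.iter j (nb_T b) y) in *.
      set (dg := floorR (- b * w - nb_ell b)) in *.
      replace w with (- (- b * w - IZR dg + IZR dg) / b) by (field; lra).
      apply Sb_div; auto. apply Sb_opp. apply Sb_add; auto. apply Sb_int. }
  specialize (Hsy Nn 0%nat ltac:(lia)). simpl in Hsy.
  assert (Hx : x = y * (-1 * b) ^ k).
  { unfold y. replace (-1 * b) with (- b) by ring. field. apply pow_nonzero. lra. }
  rewrite Hx. rewrite Rpow_mult_distr.
  apply Sb_mul; auto. apply Sb_mul; auto.
  - apply Sb_pow; auto. apply (Sb_int M N b (-1)).
  - apply Sb_pow; auto. apply Sb_b.
Qed.


Lemma mu_nonneg x y : (0 <= mu x y)%Z.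
Proof.
  unfold mu. pose proof (phase_range x y). assert (0 <= Hn x y)%Z by (unfold Hn; lia). lia.
Qed.

Lemma orbit_zero M b : good M M b ->
  forall (n0 : nat) (a c d : Z),
  (Z.to_nat (mu d (- c - M * d)) < n0)%nat ->
  nb_ell b <= IZR a + IZR c * b + IZR d * b^2 < nb_ell b + 1 ->
  exists Nn, Nat.iter Nn (nb_T b) (IZR a + IZR c * b + IZR d * b^2) = 0.
Proof.
  intros HG. pose proof (good_bounds _ _ _ HG) as [[Hb1 Hb2] [Hn1 Hn2]].
  destruct HG as (HN1 & HNM & Hb & Hc).
  destruct (ell_facts b Hb) as [[E1 E2] [E3 E4]].
  set (v := / (b+1)) in *. assert (Hv : v * (b+1) = 1) by (unfold v; field; lra).
  assert (Hvp : 0 < v) by (unfold v; apply Rinv_0_lt_compat; lra).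
  set (m := IZR M) in *.
  set (r0 := b^2 - m * b - m). set (r1 := b - m). set (g := b / (b+1)).
  assert (Hg : g = 1 - v) by (unfold g, v; field; lra).
  assert (Hell : nb_ell b = - g) by (rewrite E4; unfold g, Rdiv; ring).
  assert (HK : r0 * b = m) by (unfold r0; nra).
  assert (HK0 : 0 < r0) by nra.
  assert (Hd : (r1 - r0) * b = r0) by (unfold r1, r0; nra).
  assert (P1 : r0 < r1) by nra.
  assert (P2 : r1 < 1) by (unfold r1; lra).
  assert (Hd2 : (r1 - r0) * (b + 1) = r1) by nra.
  assert (P3 : r1 - r0 < 1 - g) by nra.
  assert (P4 : r0 < g) by nra.
  assert (P5 : 1/2 < g) by nra.
  assert (P6 : g < 1) by lra.
  induction n0 as [|n0 IH]; intros a c d Hmu Hw; [lia|].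
  set (x := d). set (y := (- c - M * d)%Z).
  set (w := IZR a + IZR c * b + IZR d * b^2) in *.
  destruct (classic (x = 0%Z /\ y = 0%Z)) as [[Ex Ey]|Hnz].
  -
    assert (d = 0%Z) by (unfold x in Ex; lia). assert (c = 0%Z) by (unfold y in Ey; lia).
    subst c d. exists 0%nat. simpl. unfold w.
    assert (Wa : w = IZR a) by (unfold w; simpl; nra).
    rewrite Wa in Hw.
    assert (a = 0%Z).
    { destruct Hw as [Hw1 Hw2]. apply Z.le_antisymm.
      - apply Z.lt_succ_r. apply lt_IZR. simpl. lra.
      - apply Z.lt_pred_le. apply lt_IZR. simpl. lra. }
    subst a. rewrite ?Ex. simpl. ring.
  - assert (Hnz' : (x <> 0 \/ y <> 0)%Z) by (apply not_and_or in Hnz; exact Hnz).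
    set (z := (a + M * x - M * y)%Z).
    assert (Ec : IZR c = - IZR y - m * IZR x).
    { unfold y, x, m. rewrite minus_IZR, opp_IZR, mult_IZR. ring. }
    assert (Hcon : IZR z - r1 * IZR y + r0 * IZR x + g = w - nb_ell b).
    { rewrite Hell. unfold w, z. rewrite Ec. rewrite minus_IZR, plus_IZR, !mult_IZR.
      fold m. unfold r1, r0, x. ring. }
    assert (Hmu2 : (mu y z < mu x y)%Z).
    { apply (key r0 r1 g); auto; rewrite Hcon; lra. }
    pose proof (mu_nonneg y z).
    set (dd := floorR (- b * w - nb_ell b)).
    assert (ET : nb_T b w = IZR (- d * M - dd) + IZR (- a - d * M) * b + IZR (- c - d * M) * b^2).
    { rewrite T_eq. fold dd. unfold w. repeat rewrite ?minus_IZR, ?opp_IZR, ?mult_IZR, ?plus_IZR.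
      fold m. apply Rminus_diag_uniq.
      transitivity (- IZR d * (b^3 - m * b^2 - m * b - m)); [ring|]. rewrite Hc. ring. }
    destruct (IH (- d * M - dd)%Z (- a - d * M)%Z (- c - d * M)%Z) as [Nn HNn].
    + replace (mu (- c - d * M) (- (- a - d * M) - M * (- c - d * M))) with (mu y z).
      * assert (Z.to_nat (mu x y) < S n0)%nat by (unfold x, y; exact Hmu).
        apply Z2Nat.inj_lt in Hmu2; try lia.
      * unfold z, y, x. f_equal; ring.
    + rewrite <- ET. apply T_range.
    + exists (S Nn). rewrite Nat.iter_succ_r. change (Nat.iter Nn (nb_T b) (nb_T b w) = 0). rewrite ET. exact HNn.
Qed.


Lemma min_nat (P : nat -> Prop) : (exists k, P k) -> exists k, P k /\ forall j, (j < k)%nat -> ~ P j.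
Proof.
  intros [k Hk]. revert Hk.
  induction k as [k IH] using (well_founded_induction lt_wf); intros Hk.
  destruct (classic (exists j, (j < k)%nat /\ P j)) as [[j [Hj1 Hj2]]|Hno].
  - apply (IH j Hj1 Hj2).
  - exists k; split; auto. intros j Hj Pj. apply Hno; eauto.
Qed.

Lemma exists_interval b x : 1 < b -> exists k, nb_in_interval b (x / (- b) ^ k).
Proof.
  intros Hb. destruct (ell_facts b Hb) as [[E1 E2] [E3 E4]].
  set (v := / (b+1)) in *. assert (Hv : v * (b+1) = 1) by (unfold v; field; lra).
  assert (Hvp : 0 < v) by (unfold v; apply Rinv_0_lt_compat; lra).
  destruct (Pow_x_infinity (- b) ltac:(rewrite Rabs_left; lra) ((Rabs x + 1) * (b + 1))) as [k Hk].
  specialize (Hk k ltac:(lia)).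
  exists k. set (p := (- b) ^ k) in *.
  assert (Hp : 0 < Rabs p) by (pose proof (Rabs_pos x); nra).
  assert (Hpn : p <> 0) by (intro Hz; rewrite Hz, Rabs_R0 in Hp; lra).
  assert (Rabs (x / p) < v).
  { unfold Rdiv. rewrite Rabs_mult, Rabs_inv. apply (Rmult_lt_reg_r (Rabs p)); auto.
    rewrite Rmult_assoc, Rinv_l by lra. pose proof (Rabs_pos x). nra. }
  unfold nb_in_interval. apply Rabs_def2 in H. nra.
Qed.

Lemma Sb_divnb M N b x k : 1 < b -> Sb M N b x -> Sb M N b (x / (- b) ^ k).
Proof.
  intros Hb Hx. induction k.
  - simpl. rewrite Rdiv_1_r. auto.
  - replace (x / (- b) ^ S k) with (- ((x / (- b) ^ k) / b)).
    + apply Sb_opp, Sb_div; auto.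
    + simpl. field. split; [apply pow_nonzero|]; lra.
Qed.

Lemma iter_Zb M N b : b^3 = IZR M * b^2 + IZR M * b + IZR N ->
  forall q y, Zb M N b (y * b ^ q) -> Zb M N b (Nat.iter q (nb_T b) y).
Proof.
  intros Hc q. induction q; intros y Hy.
  - simpl in *. rewrite Rmult_1_r in Hy. exact Hy.
  - rewrite Nat.iter_succ_r. apply IHq. rewrite T_eq.
    set (dd := floorR (- b * y - nb_ell b)).
    replace ((- b * y - IZR dd) * b ^ q) with (- (y * b ^ S q) + - (IZR dd * b ^ q)) by (simpl; ring).
    apply Zb_add; apply Zb_opp; auto. apply Zb_mul; auto. apply Zb_int. apply Zb_pow; auto.
Qed.

Lemma Sb_Fin M b x : good M M b -> Sb M M b x -> in_Fin b x.
Proof.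
  intros HG Hx. pose proof HG as HG'. destruct HG' as (HN1 & HNM & Hb & Hc).
  destruct (min_nat _ (exists_interval b x Hb)) as [k [Hk1 Hk2]].
  exists k. split; [exact Hk1|]. split; [exact Hk2|].
  set (y := x / (- b) ^ k) in *.
  assert (Hy : Sb M M b y) by (apply Sb_divnb; auto).
  destruct Hy as [q Hq].
  pose proof (iter_Zb M M b Hc q y Hq) as Hw.
  assert (Hwi : nb_ell b <= Nat.iter q (nb_T b) y < nb_ell b + 1).
  { destruct q; simpl.
    - unfold nb_in_interval in Hk1. lra.
    - apply T_range. }
  destruct Hw as (a & c & d & Ew). rewrite Ew in Hwi.
  destruct (orbit_zero M b HG (S (Z.to_nat (mu d (- c - M * d)))) a c d ltac:(lia) Hwi) as [Nn HNn].
  rewrite <- Ew in HNn.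
  exists (Nn + q)%nat. intros i Hi. apply digit_zero; auto.
  replace i with ((i - (Nn + q)) + Nn + q)%nat by lia.
  rewrite !Nat.iter_add, HNn. apply iter_zero; auto.
Qed.

Lemma Fin_ring_eq M b : good M M b -> Fin_is_ring b.
Proof.
  intros HG. pose proof HG as HG'. destruct HG' as (HN1 & HNM & Hb & Hc).
  split; [|split].
  - intros x y Hx Hy. apply (Sb_Fin M); auto. apply Sb_add; auto; apply (Fin_Sb M M b); auto.
  - intros x Hx. apply (Sb_Fin M); auto. apply Sb_opp; apply (Fin_Sb M M b); auto.
  - intros x y Hx Hy. apply (Sb_Fin M); auto. apply Sb_mul; auto; apply (Fin_Sb M M b); auto.
Qed.

Theorem theorem3 (m n : nat) (beta : R) :
  (1 <= n)%nat -> (n <= m)%nat ->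
  1 < beta ->
  beta ^ 3 - INR m * beta ^ 2 - INR m * beta - INR n = 0 ->
  (Fin_is_ring beta <-> n = m).
Proof.
  intros Hn Hnm Hb Hc.
  assert (HG : good (Z.of_nat m) (Z.of_nat n) beta).
  { unfold good. rewrite !INR_IZR_INZ in Hc. repeat split; try lia; try lra. }
  split.
  - intros [_ [Hopp _]]. destruct (Nat.eq_dec n m) as [|Hne]; auto. exfalso.
    assert (HNM : (Z.of_nat n < Z.of_nat m)%Z) by lia.
    apply (mone_not_in_Fin _ _ _ HG HNM). apply Hopp. apply (one_in_Fin _ _ _ HG HNM).
  - intros ->. apply (Fin_ring_eq (Z.of_nat m)). exact HG.
Qed.
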